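(* Let $n\ge 2$, let $\sigma,\tau\in S_n$ with ${\rm hd}(\sigma,\tau)=d$, and let $m\in\{1,\ldots,n-1\}$. Assume that the disjoint cycle decomposition of $\sigma^{-1}\tau$ has no cycle factor of odd length $\ell$ with $3\le \ell\le 2m+1$. Then ${\rm hd}\big(\sigma^{{\sf CT}^m},\tau^{{\sf CT}^m}\big)\ge d-2m$.
   Context: $S_n$ is the symmetric group on the symbols $\{0,1,\ldots,n-1\}$. Permutations are composed from left to right: for $\sigma,\tau\in S_n$, $\tau\sigma(x):=\sigma(\tau(x))$; in particular $\sigma^{-1}\tau(x)=\tau(\sigma^{-1}(x))$. The Hamming distance of $\sigma,\tau\in S_n$ is ${\rm hd}(\sigma,\tau)=|\{x\in\{0,\ldots,n-1\}:\sigma(x)\neq\tau(x)\}|$. The contraction of $\sigma\in S_n$ is the permutation $\sigma^{\sf CT}\in S_{n-1}$ (on $\{0,\ldots,n-2\}$) defined by $\sigma^{\sf CT}(x)=\sigma(n-1)$ if $x=\sigma^{-1}(n-1)$ and $\sigma^{\sf CT}(x)=\sigma(x)$ otherwise; equivalently, $\sigma^{\sf CT}$ is obtained by deleting the symbol $n-1$ from the disjoint cycle notation of $\sigma$. For $1\le m\le n-1$, the $m$th contraction is defined recursively by $\sigma^{{\sf CT}^1}=\sigma^{\sf CT}$ and $\sigma^{{\sf CT}^m}=(\sigma^{{\sf CT}^{m-1}})^{\sf CT}\in S_{n-m}$ (each contraction removes the currently largest symbol). *)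

(* Defs.v *)
From mathcomp Require Import all_boot all_fingroup.
Set Implicit Arguments. Unset Strict Implicit. Unset Printing Implicit Defensive.

(* MathComp's product is left-to-right: (s * t)%g x = t (s x), matching the
   paper's convention, so the paper's sigma^{-1} tau is (s^-1 * t)%g. *)

Local Open Scope group_scope.

Definition hd n (s t : 'S_n) : nat := #|[set x | s x != t x]|.

Section Contraction.
Variable n : nat.
Implicit Type s : 'S_n.+1.

Definition ct_raw s (x : 'I_n) : 'I_n.+1 :=
  let y := s (widen_ord (leqnSn n) x) in
  if y == ord_max then s ord_max else y.

Lemma ct_raw_lt s x : (val (ct_raw s x) < n)%N.
Proof.
rewrite /ct_raw; set w := widen_ord _ x.
case: eqP => [Hy|/eqP Hy].
- have : s ord_max != ord_max.
    apply/eqP => Hm; have : w = ord_max by apply: (@perm_inj _ s); rewrite Hy Hm.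
    by move/(congr1 val) => /=; move=> E; move: (ltn_ord x); rewrite E ltnn.
  move=> /eqP Hn; have := ltn_ord (s ord_max); rewrite ltnS leq_eqVlt.
  by case/orP => // /eqP E; case: Hn; apply: val_inj.
- have := ltn_ord (s w); rewrite ltnS leq_eqVlt.
  by case/orP => // /eqP E; case/eqP: Hy; apply: val_inj.
Qed.

Definition ct_fun s (x : 'I_n) : 'I_n := insubd x (val (ct_raw s x)).

Lemma ct_fun_val s x : val (ct_fun s x) = val (ct_raw s x).
Proof. by rewrite /ct_fun val_insubd ct_raw_lt. Qed.

Lemma ct_fun_inj s : injective (ct_fun s).
Proof.
move=> x y /(congr1 val); rewrite !ct_fun_val => /val_inj.
rewrite /ct_raw.
set wx := widen_ord _ x; set wy := widen_ord _ y.
have wxn : wx != ord_max by rewrite -val_eqE /= neq_ltn ltn_ord.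
have wyn : wy != ord_max by rewrite -val_eqE /= neq_ltn ltn_ord.
have fin : forall a b : 'I_n, widen_ord (leqnSn n) a = widen_ord (leqnSn n) b -> a = b.
  by move=> a b /(congr1 val) /= /val_inj.
case: eqP => Hx; case: eqP => Hy.
- by move=> _; apply: fin; apply: (@perm_inj _ s); rewrite Hx Hy.
- by move/perm_inj => E; rewrite -E eqxx in wyn.
- by move/perm_inj => E; rewrite E eqxx in wxn.
- by move/perm_inj/fin.
Qed.

Definition contract s : 'S_n := perm (@ct_fun_inj s).
End Contraction.

(* m-th contraction: 'S_(m + k) -> 'S_k, removing the largest symbol m times.
   contract_iter m.+1 k s = contract_iter m k (contract s), i.e.
   sigma^{CT^(m+1)} = (sigma^CT)^{CT^m} = (sigma^{CT^m})^CT. *)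
Fixpoint contract_iter (m k : nat) {struct m} : 'S_(m + k) -> 'S_k :=
  match m return 'S_(m + k) -> 'S_k with
  | 0 => fun s => s
  | m'.+1 => fun s => @contract_iter m' k (@contract (m' + k) s)
  end.

(* Main.v *)
Require Import Defs.
From mathcomp Require Import all_boot all_fingroup.
From mathcomp Require Import zify.
Set Implicit Arguments. Unset Strict Implicit. Unset Printing Implicit Defensive.

Section Gen.
Variable T : finType.
Implicit Types (f g : T -> T) (B : {set T}).

Definition cntc (l a : nat) : bool := [&& odd l, 2 < l & l <= a.*2.+1].
Definition HH (l a : nat) : nat := (l == 1) + cntc l a.
Definition isrep f v := [forall y, fconnect f v y ==> (enum_rank v <= enum_rank y)].
Definition hh f B v : nat :=
  (fingraph.order f v == 1) +
  (cntc (fingraph.order f v) #|[set y in B | fconnect f v y]| && isrep f v).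

Lemma fpath_traj f g x n :
  (forall j, j < n -> f (iter j g x) = g (iter j g x)) ->
  fpath f x (traject g (g x) n).
Proof.
elim: n x => [|n IH] x H //=.
rewrite (H 0 (ltn0Sn _)) eqxx /=; apply: IH => j lt_j.
by rewrite -!iterSr; apply: H.
Qed.

Lemma fcycle_traj f g x n :
  (forall j, j < n -> f (iter j g x) = g (iter j g x)) ->
  f (iter n g x) = x -> fcycle f (traject g x n.+1).
Proof.
move=> H Hl; rewrite trajectS (cycle_path x) /= last_traject Hl eqxx /=.
exact: fpath_traj.
Qed.

Lemma order1P f v : (fingraph.order f v == 1) = (f v == v).
Proof.
apply/idP/idP => [/eqP H|/eqP H].
  have := fconnect1 f v; rewrite fconnect_orbit /fingraph.orbit H /= inE.
  by [].
apply/eqP; rewrite (@order_cycle _ f [:: v]) //=.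
  by rewrite /cycle /= H eqxx.
by rewrite inE.
Qed.

Lemma count_rep f s : uniq s -> fcycle f s -> s != [::] ->
  count (isrep f) s = 1.
Proof.
move=> Us Cs; case: s Us Cs => [//|x0 s'] Us Cs _.
set s := x0 :: s' in Us Cs *.
have s0 : x0 \in s by rewrite inE eqxx.
case: (arg_minnP (fun v => nat_of_ord (enum_rank v)) s0) => m ms mmin.
have {}ms : m \in s := ms.
have {}mmin : forall j, j \in s -> enum_rank m <= enum_rank j := mmin.
transitivity (count_mem m s); last by rewrite count_uniq_mem // ms.
apply: eq_in_count => v vs /=.
apply/idP/eqP => [/forallP H|->].
  have := H m; rewrite (fconnect_cycle Cs vs) ms /= => Hvm.
  have Hmv := mmin v vs.
  by apply: enum_rank_inj; apply: val_inj; apply/eqP; rewrite eqn_leq Hvm Hmv.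
apply/forallP => y; apply/implyP; rewrite (fconnect_cycle Cs ms).
exact: mmin.
Qed.

Lemma sum_count (P : pred T) (s : seq T) : \sum_(v <- s) (P v : nat) = count P s.
Proof. by elim: s => [|x s IH]; rewrite ?big_nil ?big_cons ?IH. Qed.

Lemma sum_const (c : nat) (s : seq T) : \sum_(v <- s) c = size s * c.
Proof. by elim: s => [|x s IH]; rewrite ?big_nil ?big_cons ?IH ?mulSn. Qed.

Lemma sum_andb (b : bool) (P : pred T) (s : seq T) :
  \sum_(v <- s) (b && P v : nat) = b * count P s.
Proof. elim: s => [|x s IH]; rewrite ?big_nil ?muln0 // big_cons IH /=; clear IH. case: (P x); case: b => /=; rewrite ?mul0n ?mul1n ?add0n //. Qed.

Lemma sum_cycle f B s : uniq s -> fcycle f s ->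
  \sum_(v <- s) hh f B v = HH (size s) (count (mem B) s).
Proof.
move=> Us Cs; case: (altP (s =P [::])) => [->|sn0].
  by rewrite big_nil.
have Ho : forall v, v \in s -> fingraph.order f v = size s.
  by move=> v vs; apply: order_cycle.
have Hc : forall v, v \in s -> #|[set y in B | fconnect f v y]| = count (mem B) s.
  move=> v vs; rewrite -(eq_card (A := [pred y in s | y \in B])).
    rewrite -size_filter.
    rewrite -(card_uniqP (filter_uniq _ Us)); apply: eq_card => y.
    by rewrite mem_filter !inE andbC.
  by move=> y; rewrite !inE (fconnect_cycle Cs vs) andbC.
rewrite (eq_big_seq (fun v => (size s == 1) + (cntc (size s) (count (mem B) s) && isrep f v))); last first.
  by move=> v vs; rewrite /hh Ho // Hc.
rewrite big_split /= sum_const sum_andb count_rep // muln1 /HH.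
by case: (size s) => [|[|n]] //=; rewrite muln0.
Qed.


Lemma AR1 i j a1 a2 : 1 + HH i a1 + HH j a2 <= 2 + HH (i + j).+1 (1 + a1 + a2).
Proof.
rewrite /HH /cntc /= oddD.
move: (odd_double_half i) (odd_double_half j).
case: (odd i); case: (odd j) => /= Hi Hj; lia.
Qed.

Lemma HH_le1 l a : HH l a <= 1.
Proof. rewrite /HH /cntc; case: eqP => [->|] //= _; by case: andP. Qed.

Lemma idx_inj (pi : {perm T}) x a b : a < fingraph.order pi x -> b < fingraph.order pi x ->
  iter a pi x = iter b pi x -> a = b.
Proof.
move=> ha hb E; have U := orbit_uniq pi x.
have := nth_uniq x (s := fingraph.orbit pi x) (i := a) (j := b).
rewrite size_orbit ha hb U => /(_ erefl erefl erefl).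
rewrite /fingraph.orbit !nth_traject // E eqxx => /esym/eqP //.
Qed.

Definition stepf (pi : {perm T}) z p v := tperm z (pi p) (pi (tperm z p v)).
Definition Hs f B := \sum_v hh f B v.

Lemma hh_eqf f g B1 B2 v : (forall y, fconnect f v y = fconnect g v y) ->
  (forall y, fconnect f v y -> (y \in B1) = (y \in B2)) ->
  hh f B1 v = hh g B2 v.
Proof.
move=> Hf HB.
have Ho : fingraph.order f v = fingraph.order g v by apply: eq_card => y; rewrite !inE /= Hf.
have Hr : isrep f v = isrep g v by apply: eq_forallb => y; rewrite Hf.
have Hc : [set y in B1 | fconnect f v y] = [set y in B2 | fconnect g v y].
  apply/setP => y; rewrite !inE -Hf; case E: (fconnect f v y); rewrite ?andbF ?andbT //.
  exact: HB.
by rewrite /hh Ho Hr Hc.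
Qed.

End Gen.

Section Core.
Variables (T : finType) (pi : {perm T}) (z p : T) (B : {set T}).
Hypothesis zB : z \in B.
Local Notation q := (pi p).
Local Notation f' := (stepf pi z p).
Let inj : injective pi := @perm_inj _ pi.
Local Notation fc := (fconnect pi).

Lemma fz : f' z = z.
Proof. by rewrite /stepf tpermL tpermR. Qed.

Lemma fcsym x y : fc x y = fc y x.
Proof. exact: fconnect_sym. Qed.

Lemma out_eq v : ~~ fc z v -> ~~ fc p v -> f' v = pi v.
Proof.
move=> nz np; rewrite /stepf.
have vz : z != v by apply: contraNneq nz => ->; exact: connect0.
have vp : p != v by apply: contraNneq np => ->; exact: connect0.
rewrite (tpermD vz vp) tpermD //.
  apply: contraNneq nz => E; rewrite fcsym; apply/connectP.
  by exists [:: z] => //=; rewrite E eqxx.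
by apply: contra_neq vp => /inj.
Qed.

Lemma hh_out v : ~~ fc z v -> ~~ fc p v -> hh f' (B :\ z) v = hh pi B v.
Proof.
move=> nz np.
have Hy : forall y, fc v y -> ~~ fc z y && ~~ fc p y.
  move=> y vy; apply/andP; split.
    by apply: contra nz => zy; apply: connect_trans zy _; rewrite fcsym.
  by apply: contra np => py; apply: connect_trans py _; rewrite fcsym.
have Cy : fcycle f' (fingraph.orbit pi v).
  rewrite (eq_in_cycle (P := mem (fingraph.orbit pi v)) (e' := frel pi)).
    exact: cycle_orbit.
  move=> x y xo _ /=; rewrite -fconnect_orbit in xo.
  by case/andP: (Hy x xo) => a b; rewrite out_eq.
  by apply/allP.
have vo : v \in fingraph.orbit pi v by exact: in_orbit.
apply: hh_eqf.
  by move=> y; rewrite (fconnect_cycle Cy vo) -fconnect_orbit.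
move=> y; rewrite (fconnect_cycle Cy vo) -fconnect_orbit => vy.
rewrite !inE andb_idl //; move=> _; apply: contraNneq (proj1 (andP (Hy y vy))) => ->.
exact: connect0.
Qed.



Lemma case_fix : pi z = z -> Hs f' (B :\ z) <= Hs pi B.
Proof.
move=> Hz.
have E : f' =1 pi.
  move=> v; rewrite /stepf; case: (tpermP z p v) => [->|->|vz vp].
  - by rewrite tpermR.
  - by rewrite Hz tpermL.
  - rewrite tpermD //.
      by apply/eqP => E; apply: vz; apply: inj; rewrite -E.
    by apply/eqP => E; apply: vp; apply: inj; rewrite E.
rewrite /Hs; apply: leq_sum => v _.
have Hf := eq_fconnect E v.
have Ho : fingraph.order f' v = fingraph.order pi v by apply: eq_card => y; rewrite !inE /= Hf.
have Hr : isrep f' v = isrep pi v by apply: eq_forallb => y; rewrite Hf.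
have Hc : #|[set y in B :\ z | fconnect f' v y]| <= #|[set y in B | fconnect pi v y]|.
  apply: subset_leq_card; apply/subsetP => y; rewrite !inE Hf.
  by case/andP => /andP[_ ->] ->.
rewrite /hh Ho Hr leq_add2l; case: isrep; rewrite ?andbF ?andbT //.
move: Hc; rewrite /cntc; set a := #|_|; set b := #|_|.
move: (odd_double_half (fingraph.order pi v)); case: odd => /=; lia.
Qed.

Local Notation l := (fingraph.order pi z).

Lemma ne_iter a b : a < l -> b < l -> a != b -> iter a pi z != iter b pi z.
Proof. move=> ha hb; apply: contra_neq; exact: idx_inj. Qed.

Lemma l_gt0 : 0 < l.
Proof. exact: fingraph.order_gt0. Qed.

Lemma iter_l : iter l pi z = z.
Proof. exact: iter_order. Qed.

Lemma cycA1 i : pi z != z -> i < l -> iter i pi z = p ->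
  fcycle f' (traject pi (pi z) i).
Proof.
case: i => [|i] // Hz il ip; apply: fcycle_traj.
  move=> jj ljj; rewrite -iterSr /stepf.
  have y0 : z != iter jj.+1 pi z.
    by rewrite -[z in z != _]/(iter 0 pi z) ne_iter //; lia.
  have yp : p != iter jj.+1 pi z by rewrite -ip ne_iter //; lia.
  rewrite (tpermD y0 yp) tpermD //.
    by rewrite -iterS -[z in z != _]/(iter 0 pi z) ne_iter //; lia.
  by apply: contra_neq yp => /inj.
rewrite -iterSr ip /stepf tpermR tpermD //.
  by rewrite eq_sym.
have : z != p by rewrite -ip -[z in z != _]/(iter 0 pi z) ne_iter //; lia.
by apply: contra_neq => /inj.
Qed.

Lemma cycA2 i j : (i + j).+1 = l -> iter i pi z = p ->
  fcycle f' (traject pi q j).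
Proof.
case: j => [|j] // lij ip.
have Eq : forall jj, iter jj pi q = iter (i.+1 + jj) pi z.
  by move=> jj; rewrite addnC iterD iterS ip.
apply: fcycle_traj.
  move=> jj ljj; rewrite Eq /stepf.
  have y0 : z != iter (i.+1 + jj) pi z.
    by rewrite -[z in z != _]/(iter 0 pi z) ne_iter //; lia.
  have yp : p != iter (i.+1 + jj) pi z.
    by rewrite -ip ne_iter //; lia.
  rewrite (tpermD y0 yp) tpermD //.
    by rewrite -iterS -[z in z != _]/(iter 0 pi z) ne_iter //; lia.
  by apply: contra_neq yp => /inj.
rewrite Eq /stepf.
have y0 : z != iter (i.+1 + j) pi z.
  by rewrite -[z in z != _]/(iter 0 pi z) ne_iter //; lia.
have yp : p != iter (i.+1 + j) pi z.
  by rewrite -ip ne_iter //; lia.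
rewrite (tpermD y0 yp) -iterS.
have -> : (i.+1 + j).+1 = l by rewrite -lij; lia.
by rewrite iter_l tpermL.
Qed.



Lemma cycB : pi z != z -> ~~ fc z p ->
  fcycle f' (traject pi (pi z) l.-1 ++ traject pi q (fingraph.order pi p)).
Proof.
move=> Hz zp.
have l1 : 1 < l.
  have := l_gt0; case E: l => [|[|n]] //= _.
  by move: (iter_l); rewrite E /= => /eqP; rewrite (negPf Hz).
set l2 := fingraph.order pi p.
have l20 : 0 < l2 := fingraph.order_gt0 _ _.
have nc : forall y, fc p y -> ~~ fc z y.
  by move=> y py; apply: contra zp => zy; apply: connect_trans zy _; rewrite fcsym.
have zp' : z != p by apply: contraNneq zp => ->; exact: connect0.
have qz : pi z != q by apply: contra_neq zp' => /inj.
have Ez : forall a, a < l -> fc z (iter a pi z) by move=> a _; exact: fconnect_iter.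
have Ep : forall a, fc p (iter a pi p) by move=> a; exact: fconnect_iter.
have ne_p : forall a, a < l -> p != iter a pi z.
  move=> a al; apply: contraNneq zp => ->; exact: Ez.
have ne_z : forall a, z != iter a pi p.
  by move=> a; apply: contraNneq (nc _ (Ep a)) => <-; exact: connect0.
case El: l l1 => [|[|l']] // _.
case El2: l2 l20 => [|l2'] // _.
rewrite [l'.+2.-1]/= !trajectS (cycle_path z) last_cat /= last_traject.
have -> : iter l2' pi (pi p) = p by rewrite -iterSr -El2 /l2 iter_order.
rewrite /= cat_path /=; apply/and3P; split.
- by rewrite /stepf tpermR tpermD // eq_sym.
- apply: fpath_traj => j jl; rewrite -iterSr /stepf.
  have y0 : z != iter j.+1 pi z.
    by rewrite -[z in z != _]/(iter 0 pi z) ne_iter // El; lia.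
  rewrite (tpermD y0 (ne_p _ _)); last by rewrite El; lia.
  rewrite tpermD //.
    by rewrite -iterS -[z in z != _]/(iter 0 pi z) ne_iter // El; lia.
  by apply: contra_neq (ne_p j.+1 _) => [/inj|]; rewrite // El; lia.
- rewrite last_traject -iterSr /=; apply/andP; split.
  + rewrite /stepf.
    have y0 : z != iter l'.+1 pi z.
      by rewrite -[z in z != _]/(iter 0 pi z) ne_iter // El; lia.
    rewrite (tpermD y0 (ne_p _ _)); last by rewrite El; lia.
    by rewrite -iterS -El iter_l tpermL.
  + apply: fpath_traj => j jl; rewrite -iterSr /stepf.
    have yp : p != iter j.+1 pi p.
      rewrite -[p in p != _]/(iter 0 pi p); apply/negP => /eqP E.
      have := @idx_inj _ pi p 0 j.+1; rewrite -/l2 El2 => H.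
      by move: (H isT ltac:(lia) E).
    rewrite (tpermD (ne_z _) yp) tpermD //; first by rewrite -iterS; exact: ne_z.
    by apply: contra_neq yp => /inj.
Qed.



Lemma hh_fz : hh f' (B :\ z) z = 1.
Proof.
have Ho : fingraph.order f' z = 1 by apply/eqP; rewrite order1P fz.
by rewrite /hh Ho.
Qed.

Lemma core_step : Hs f' (B :\ z) <= Hs pi B + 2.
Proof.
case: (eqVneq (pi z) z) => [Hz|Hz].
  by rewrite (leq_trans (case_fix Hz)) ?leq_addr.
pose X := [pred v | fc z v || fc p v].
rewrite /Hs (bigID X) [X in _ <= X + _](bigID X) /=.
have -> : \sum_(i | ~~ X i) hh f' (B :\ z) i = \sum_(i | ~~ X i) hh pi B i.
  by apply: eq_bigr => v; rewrite negb_or => /andP[a b]; exact: hh_out.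
rewrite addnAC leq_add2r.
have Uc : uniq (fingraph.orbit pi z) := orbit_uniq _ _.
have Cc : fcycle pi (fingraph.orbit pi z) := cycle_orbit inj z.
case: (boolP (fc z p)) => zp.
  have Xc : forall v, (fc z v || fc p v) = (v \in fingraph.orbit pi z).
    move=> v; rewrite -fconnect_orbit; apply/orP/idP => [[//|pv]|->]; last by left.
    exact: connect_trans zp pv.
  rewrite (eq_bigl (fun v => v \in fingraph.orbit pi z)) //.
  rewrite [X in _ <= X + _](eq_bigl (fun v => v \in fingraph.orbit pi z)) //.
  rewrite -!big_uniq //.
  rewrite [X in _ <= X + _](sum_cycle B Uc Cc) size_orbit.
  set i := findex pi z p.
  have il : i < l := findex_max zp.
  have ip : iter i pi z = p := iter_findex zp.
  set j := l - i.+1.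
  have lij : (i + j).+1 = l by rewrite /j; lia.
  have Ec : fingraph.orbit pi z = z :: (traject pi (pi z) i ++ traject pi q j).
    by rewrite /fingraph.orbit -lij trajectS trajectD -iterSr iterS ip.
  rewrite Ec in Uc *.
  rewrite big_cons big_cat hh_fz /=.
  case/andP: Uc => znc; rewrite -/(uniq _) cat_uniq => /and3P[U1 _ U2].
  rewrite (sum_cycle _ U1 (cycA1 Hz il ip)) (sum_cycle _ U2 (cycA2 lij ip)).
  rewrite zB count_cat !size_traject.
  have Ecnt : forall s, z \notin s -> count (mem (B :\ z)) s = count (mem B) s.
    move=> s zs; apply: eq_in_count => v vs /=; rewrite !inE.
    by have -> : v != z by apply: contraNneq zs => <-.
  rewrite !Ecnt; last 2 first.
  - by apply: contra znc; rewrite mem_cat => ->; rewrite orbT.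
  - by apply: contra znc; rewrite mem_cat => ->.
  rewrite [in X in X <= _]addnA.
  apply: leq_trans (AR1 _ _ _ _) _.
  by rewrite lij addnC addnA.
have Ud : uniq (fingraph.orbit pi p) := orbit_uniq _ _.
have Ucd : uniq (fingraph.orbit pi z ++ fingraph.orbit pi p).
  rewrite cat_uniq Uc Ud andbT /=; apply/hasPn => y; rewrite -!fconnect_orbit => py.
  by apply: contra zp => zy; apply: connect_trans zy _; rewrite fcsym.
rewrite (eq_bigl (fun v => v \in fingraph.orbit pi z ++ fingraph.orbit pi p)); last first.
  by move=> v; rewrite mem_cat -!fconnect_orbit.
rewrite -big_uniq //.
apply: leq_trans (leq_addl _ _).
set e := traject pi (pi z) l.-1 ++ traject pi q (fingraph.order pi p).
have Pe : perm_eq (fingraph.orbit pi z ++ fingraph.orbit pi p) (z :: e).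
  have Ec : fingraph.orbit pi z = z :: traject pi (pi z) l.-1.
    by rewrite /fingraph.orbit; case: l l_gt0.
  have l20 : 0 < fingraph.order pi p := fingraph.order_gt0 _ _.
  have Ed : fingraph.orbit pi p = p :: traject pi q (fingraph.order pi p).-1.
    by rewrite /fingraph.orbit; case: (fingraph.order pi p) l20.
  have Eq : traject pi q (fingraph.order pi p) = rcons (traject pi q (fingraph.order pi p).-1) p.
    rewrite -{1}(prednK l20) trajectSr; congr rcons.
    by rewrite -iterSr prednK // iter_order.
  rewrite /e Ec Ed Eq /= perm_cons perm_cat2l.
  by rewrite perm_sym perm_rcons perm_refl.
rewrite (perm_big _ Pe) big_cons hh_fz.
have Ue : uniq e by have := perm_uniq Pe; rewrite Ucd /= => /esym /andP[].
rewrite (sum_cycle _ Ue (cycB Hz zp)).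
by rewrite ltnS HH_le1.
Qed.


End Core.

Section Glob.
Variable N : nat.
Implicit Types (s t : 'S_N) (z : 'I_N).

Definition stp z s : 'S_N := (s * tperm z (s z))%g.
Definition stpn (n : nat) s : 'S_N := if insub n is Some z then stp z s else s.
Fixpoint E (j : nat) s : 'S_N := if j is j'.+1 then stpn (N - j) (E j' s) else s.

Lemma stpE z s x : stp z s x = tperm z (s z) (s x).
Proof. by rewrite /stp permM. Qed.

Lemma stp_z z s : stp z s z = z.
Proof. by rewrite stpE tpermR. Qed.

Lemma stp_fix z s x : s x = x -> stp z s x = x.
Proof.
move=> H; rewrite stpE H; case: (tpermP z (s z) x) => [E1|E1|] //.
  by rewrite E1 in H *.
by rewrite E1 in H *; rewrite (perm_inj H).
Qed.

Lemma stp_pi z s t : (fun_of_perm ((stp z s)^-1 * stp z t)%g) =1 stepf (s^-1 * t)%g z (s z).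
Proof.
move=> v; rewrite /stp /stepf !permM invMg tpermV !permM !permK.
by [].
Qed.

Lemma Hs_ext (f g : 'I_N -> 'I_N) B : f =1 g -> Hs f B = Hs g B.
Proof.
move=> fg; apply: eq_bigr => v _; apply: hh_eqf => // y.
exact: eq_fconnect.
Qed.



Lemma E_fix j s : j <= N -> forall x : 'I_N, N - j <= x -> E j s x = x.
Proof.
elim: j => [|j IH] jN x hx /=.
  by have := ltn_ord x; lia.
rewrite /stpn; case: insubP => [z _ zv|].
  case: (eqVneq x z) => [->|xz]; first exact: stp_z.
  apply: stp_fix; apply: IH; first lia.
  have : (x : nat) != (z : nat) by [].
  have zv' : (z : nat) = N - j.+1 := zv.
  rewrite zv'; lia.
by move=> /negP; case; have := ltn_ord x; lia.
Qed.

Variable k : nat.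
Definition A j := [set x : 'I_N | k <= x < N - j].

Lemma step_ineq j s t : j < N - k ->
  Hs ((E j.+1 s)^-1 * E j.+1 t)%g (A j.+1) <= Hs ((E j s)^-1 * E j t)%g (A j) + 2.
Proof.
move=> jk /=; rewrite /stpn; case: insubP => [z _ zv|]; last first.
  by move=> /negP; case; lia.
have {}zv : (z : nat) = N - j.+1 := zv.
have zA : z \in A j by rewrite inE zv; lia.
have -> : A j.+1 = A j :\ z.
  apply/setP => x; rewrite !inE.
  have -> : (x != z) = ((x : nat) != N - j.+1) by rewrite -zv.
  lia.
rewrite (Hs_ext _ (stp_pi _ _ _)).
exact: core_step.
Qed.

Lemma main_ineq j s t : j <= N - k ->
  Hs ((E j s)^-1 * E j t)%g (A j) <= Hs (s^-1 * t)%g (A 0) + j.*2.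
Proof.
elim: j => [|j IH] jk; first by rewrite addn0.
apply: leq_trans (step_ineq s t _) _; first lia.
have := IH (ltnW jk); lia.
Qed.

End Glob.

Lemma val_tperm n (a b c : 'I_n) :
  val (tperm a b c) = if val c == val a then val b else if val c == val b then val a else val c.
Proof.
case: (tpermP a b c) => [->|->|H1 H2]; rewrite ?eqxx //.
  by case: eqP => // /val_inj ->.
by rewrite (introF eqP (fun E => H1 (val_inj E))) (introF eqP (fun E => H2 (val_inj E))).
Qed.

Lemma ctE n (s : 'S_n.+1) (x : 'I_n) :
  val (contract s x) = val (stp ord_max s (widen_ord (leqnSn n) x)).
Proof.
rewrite /contract permE ct_fun_val /ct_raw stpE.
case: (tpermP ord_max (s ord_max) (s (widen_ord (leqnSn n) x))) => [E1|E1|H1 H2].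
- by rewrite E1 eqxx.
- move/perm_inj: E1 => /(congr1 val) /= E1.
  by have := ltn_ord x; rewrite E1 ltnn.
- by rewrite (introF eqP H1).
Qed.

Lemma stpn_fix N i (s : 'S_N) x : s x = x -> stpn i s x = x.
Proof. by rewrite /stpn; case: insubP => // z _ _; exact: stp_fix. Qed.

Lemma restr n (rho : 'S_n.+1) (r : 'S_n) i : i < n ->
  (forall y, val (r y) = val (rho (widen_ord (leqnSn n) y))) ->
  forall y, val (stpn i r y) = val (stpn i rho (widen_ord (leqnSn n) y)).
Proof.
move=> iN Hr y; rewrite /stpn.
case: insubP => [z' _ z'v|]; last by rewrite iN.
case: insubP => [z _ zv|]; last by rewrite ltnS ltnW.
rewrite !stpE !val_tperm !Hr.
have -> : widen_ord (leqnSn n) z' = z by apply: val_inj; rewrite /= z'v zv.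
by rewrite z'v zv.
Qed.

Lemma iterE n (s : 'S_n.+1) j :
  (forall y : 'I_n, val (E j (contract s) y) = val (E j.+1 s (widen_ord (leqnSn n) y))) /\
  E j.+1 s ord_max = ord_max.
Proof.
elim: j => [|j [IH1 IH2]].
  have H1 : E 1 s = stp ord_max s.
    rewrite /= /stpn; case: insubP => [z _ zv|]; last by rewrite subn1 /= ltnSn.
    by congr stp; apply: val_inj; rewrite zv /= subn1.
  by rewrite H1 stp_z; split => // y; rewrite ctE.
split; last by rewrite [E j.+2 s]/= stpn_fix.
case: n s IH1 IH2 => [|n] s IH1 IH2 y; first by case: y.
rewrite [E j.+1 _]/= [E j.+2 _]/=.
have -> : n.+2 - j.+2 = n.+1 - j.+1 by [].
apply: restr => //; first lia.
Qed.

Lemma CI k m (s : 'S_(m + k)) (x : 'I_k) :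
  val ((@contract_iter m k s) x) = val (E m s (widen_ord (leq_addl m k) x)).
Proof.
elim: m s x => [|m IH] s x.
  by rewrite /=; congr (val (s _)); apply: val_inj.
rewrite [@contract_iter m.+1 k s]/= IH.
have [H _] := iterE s m.
rewrite H; congr (val (E _ _ _)); exact: val_inj.
Qed.

Lemma fix_hd N (s t : 'S_N) : #|[set v | (s^-1 * t)%g v == v]| + hd s t = N.
Proof.
have -> : [set v | (s^-1 * t)%g v == v] = s @: [set x | s x == t x].
  apply/setP => v; rewrite inE; apply/idP/imsetP => [H|[x Hx ->]].
    exists (s^-1%g v); last by rewrite permKV.
    by rewrite inE permKV eq_sym -permM.
  by move: Hx; rewrite inE permM permK eq_sym.
rewrite card_imset; last exact: perm_inj.
rewrite /hd -[X in _ = X]card_ord -(cardsC [set x | s x == t x]); congr (_ + _).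
by apply: eq_card => x; rewrite !inE.
Qed.

Lemma Hs_ge_fix (T : finType) (f : T -> T) (B : {set T}) : #|[set v | f v == v]| <= Hs f B.
Proof.
rewrite -sum1_card /Hs big_mkcond /=; apply: leq_sum => v _.
by rewrite inE /hh order1P; case: (f v == v).
Qed.

Lemma porbit_order (T : finType) (s : {perm T}) x : #|porbit s x| = fingraph.order s x.
Proof.
have n0 := card_porbit_neq0 s x.
have U := uniq_traject_porbit s x.
have It := iter_porbit s x.
move: n0 U It; case: #|porbit s x| => [//|n] _ U It.
have C : fcycle s (traject s x n.+1).
  by apply: fcycle_traj => //; rewrite -iterS.
by rewrite (order_cycle C U) ?size_traject // inE eqxx.
Qed.

Theorem theorem5p2 (m k : nat) (hm : (1 <= m)%N) (hk : (1 <= k)%N)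
  (sigma tau : 'S_(m + k)) (d : nat) :
  hd sigma tau = d ->
  (forall x : 'I_(m + k),
     let l := #|porbit (sigma^-1 * tau)%g x| in
     ~~ [&& odd l, (3 <= l)%N & (l <= 2 * m + 1)%N]) ->
  (d - 2 * m <= hd (@contract_iter m k sigma) (@contract_iter m k tau))%N.
Proof.
move=> hd0 Hyp.
have H1 := @main_ineq (m + k) k m sigma tau.
have := H1 ltac:(lia) => {}H1.
have cardA : #|A (m + k) k 0| <= m.
  rewrite cardE -(size_map val); apply: leq_trans (_ : _ <= size (iota k m)) _; last by rewrite size_iota.
  apply: uniq_leq_size.
    by rewrite map_inj_uniq ?enum_uniq //; exact: val_inj.
  move=> y /mapP[x]; rewrite mem_enum inE => /andP[Ha Hb] ->.
  rewrite mem_iota -[val x]/(nat_of_ord x); lia.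
have H0 : Hs (sigma^-1 * tau)%g (A (m + k) k 0) = #|[set v | (sigma^-1 * tau)%g v == v]|.
  rewrite /Hs -sum1_card [RHS]big_mkcond /=; apply: eq_bigr => v _; rewrite inE /hh order1P.
  suff -> : cntc (fingraph.order (sigma^-1 * tau)%g v)
      #|[set y in A (m + k) k 0 | fconnect (sigma^-1 * tau)%g v y]| = false.
    by rewrite andFb addn0; case: (_ == v).
  apply/negbTE; apply: contra (Hyp v) => /and3P[o l2 la].
  rewrite /= porbit_order o /=.
  have : #|[set y in A (m + k) k 0 | fconnect (sigma^-1 * tau)%g v y]| <= #|A (m + k) k 0|.
    by apply: subset_leq_card; apply/subsetP => y; rewrite inE => /andP[].
  lia.
have Hfix := fix_hd sigma tau.
have Hfix' := fix_hd (E m sigma) (E m tau).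
have Hge := Hs_ge_fix (fun_of_perm ((E m sigma)^-1 * E m tau)%g) (A (m + k) k m).
have Hhd : hd (E m sigma) (E m tau) <= hd (@contract_iter m k sigma) (@contract_iter m k tau).
  rewrite /hd.
  apply: leq_trans (_ : _ <= #|widen_ord (leq_addl m k) @:
     [set y | (@contract_iter m k sigma) y != (@contract_iter m k tau) y]|) (leq_imset_card _ _).
  apply: subset_leq_card; apply/subsetP => x; rewrite inE => Hx.
  have xk : x < k.
    rewrite ltnNge; apply: contra Hx => kx.
    have F : forall s, E m s x = x by move=> s; apply: E_fix; lia.
    by rewrite !F.
  apply/imsetP; exists (Ordinal xk); last by apply: val_inj.
  rewrite inE; apply: contra Hx => /eqP E1.
  have := congr1 val E1; rewrite !CI.
  have -> : widen_ord (leq_addl m k) (Ordinal xk) = x by apply: val_inj.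
  by move/val_inj => ->.
lia.
Qed.
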